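(* The space $X_{\mathrm{crs}}$ is Hausdorff but not paracompact.
   Context: Let $X$ be the following 2-dimensional CW-complex. Its 0-cells are $e_n^0$, $n\ge 0$; the point $x=e_0^0$ is called the origin. For each $n\ge1$ there are two 1-cells $e_n^1, e_{-n}^1$, each joining $x$ to $e_n^0$, so that $e_0^0\cup e_n^0\cup e_n^1\cup e_{-n}^1$ is homeomorphic to a circle; for each $n\ge1$ a 2-cell $e_n^2$ is attached via a homeomorphism $\varphi_n:S^1\to e_0^0\cup e_n^0\cup e_n^1\cup e_{-n}^1$. Thus each closed 2-cell $\overline{e_n^2}$ is a closed disk having $x$ and $e_n^0$ on its boundary, and $X$ is a wedge at $x$ of countably many closed disks, carrying the CW (weak) topology. The coarser topology on the set $X$ consists of all subsets $U\subset X$ that are open in the CW-topology and either do not contain $x$, or contain $\overline{e_n^2}\smallsetminus e_n^0$ for all but finitely many $n\ge1$. The set $X$ with this coarser topology is denoted $X_{\mathrm{crs}}$. A space is paracompact if it is Hausdorff and every open cover has a locally finite open refinement. *)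

(* Defs.v *)
From Stdlib Require Import Reals List.
Open Scope R_scope.

Definition hausdorff {T : Type} (op : (T -> Prop) -> Prop) : Prop :=
  forall x y : T, x <> y ->
    exists U V : T -> Prop, op U /\ op V /\ U x /\ V y /\
      (forall z, ~ (U z /\ V z)).

Definition open_cover {T : Type} (op : (T -> Prop) -> Prop)
    (I : Type) (U : I -> T -> Prop) : Prop :=
  (forall i, op (U i)) /\ (forall x, exists i, U i x).

Definition refines {T : Type} {I J : Type}
    (V : J -> T -> Prop) (U : I -> T -> Prop) : Prop :=
  forall j, exists i, forall x, V j x -> U i x.

Definition locally_finite {T : Type} (op : (T -> Prop) -> Prop)
    {J : Type} (V : J -> T -> Prop) : Prop :=
  forall x, exists W : T -> Prop, op W /\ W x /\
    exists l : list J, forall j, (exists z, W z /\ V j z) -> In j l.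

Definition paracompact {T : Type} (op : (T -> Prop) -> Prop) : Prop :=
  hausdorff op /\
  forall (I : Type) (U : I -> T -> Prop), open_cover op I U ->
    exists (J : Type) (V : J -> T -> Prop),
      open_cover op J V /\ refines V U /\ locally_finite op V.

(* Model closed disk D = {(a,b) | a^2+b^2 <= 1}; on its boundary the point
   (-1,0) is glued to the origin x and (1,0) is the vertex e_n^0. *)
Definition in_disk (p : R * R) : Prop := (fst p) ^ 2 + (snd p) ^ 2 <= 1.
Definition glue_pt : R * R := (-1, 0).
Definition vertex_pt : R * R := (1, 0).

Definition Dpunct : Type := { p : R * R | in_disk p /\ p <> glue_pt }.

(* Points of X: None is the origin x = e_0^0; Some (n, p) is the point p of
   the (n+1)-st closed disk (closure of e_{n+1}^2) other than the origin. *)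
Definition X : Type := option (nat * Dpunct).
Definition origin : X := None.

Definition pullback (U : X -> Prop) (n : nat) (p : R * R) : Prop :=
  (p = glue_pt /\ U origin) \/
  (exists h : in_disk p /\ p <> glue_pt, U (Some (n, exist _ p h))).

(* CW (weak) topology: U open iff its trace on every closed 2-cell is open
   in that closed disk (subspace topology from R^2). *)
Definition CW_open (U : X -> Prop) : Prop :=
  forall (n : nat) (p : R * R), in_disk p -> pullback U n p ->
    exists eps : R, 0 < eps /\
      forall q : R * R, in_disk q ->
        (fst q - fst p) ^ 2 + (snd q - snd p) ^ 2 < eps ^ 2 ->
        pullback U n q.

Definition crs_open (U : X -> Prop) : Prop :=
  CW_open U /\
  (U origin ->
     exists N : nat, forall n : nat, (N <= n)%nat ->
       forall p : Dpunct, proj1_sig p <> vertex_pt -> U (Some (n, p))).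

(* Main.v *)
Require Import Defs.
From Stdlib Require Import Reals List.
From Stdlib Require Import Lra Lia Classical ClassicalEpsilon ProofIrrelevance.
Open Scope R_scope.

Definition mkU (b : Prop) (F : nat -> R * R -> Prop) : X -> Prop :=
  fun z => match z with None => b | Some (m, p) => F m (proj1_sig p) end.

Definition ropen (S : R * R -> Prop) : Prop :=
  forall p, S p -> exists eps, 0 < eps /\ forall q,
    (fst q - fst p) ^ 2 + (snd q - snd p) ^ 2 < eps ^ 2 -> S q.

Lemma small_coord x y e : 0 < e -> x ^ 2 + y ^ 2 < e ^ 2 -> Rabs x < e /\ Rabs y < e.
Proof. intros He H. split; unfold Rabs; destruct (Rcase_abs _); nra. Qed.

Lemma ropen_ext S T : (forall q, S q <-> T q) -> ropen T -> ropen S.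
Proof.
  intros E HT p Hp. apply E in Hp. destruct (HT p Hp) as [e [He Hq]].
  exists e; split; auto. intros q H. apply E; auto.
Qed.

Lemma ropen_const P : ropen (fun _ => P).
Proof. intros p Hp. exists 1; split; [lra|auto]. Qed.

Lemma ropen_and S T : ropen S -> ropen T -> ropen (fun q => S q /\ T q).
Proof.
  intros HS HT p [Hs Ht]. destruct (HS p Hs) as [e1 [H1 K1]].
  destruct (HT p Ht) as [e2 [H2 K2]].
  exists (Rmin e1 e2). pose proof (Rmin_l e1 e2). pose proof (Rmin_r e1 e2).
  pose proof (Rmin_pos e1 e2 H1 H2).
  split; auto. intros q Hq. split; [apply K1|apply K2]; nra.
Qed.

Lemma ropen_neq c : ropen (fun q => q <> c).
Proof.
  intros [p1 p2] Hp. destruct c as [c1 c2].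
  destruct (Req_dec p1 c1) as [E1|N1].
  - destruct (Req_dec p2 c2) as [E2|N2]. { subst; congruence. }
    exists (Rabs (p2 - c2)). split. { apply Rabs_pos_lt; lra. }
    intros [q1 q2] Hq E. injection E as -> ->. simpl in Hq.
    apply small_coord in Hq as [_ B]; [|apply Rabs_pos_lt; lra].
    rewrite Rabs_minus_sym in B. lra.
  - exists (Rabs (p1 - c1)). split. { apply Rabs_pos_lt; lra. }
    intros [q1 q2] Hq E. injection E as -> ->. simpl in Hq.
    apply small_coord in Hq as [B _]; [|apply Rabs_pos_lt; lra].
    rewrite Rabs_minus_sym in B. lra.
Qed.

Definition sq (c : R * R) (r : R) (q : R * R) : Prop :=
  Rabs (fst q - fst c) < r /\ Rabs (snd q - snd c) < r.

Lemma sq_self c r : 0 < r -> sq c r c.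
Proof.
  intros Hr. unfold sq. replace (fst c - fst c) with 0 by ring.
  replace (snd c - snd c) with 0 by ring. rewrite Rabs_R0. lra.
Qed.

Lemma ropen_sq c r : ropen (sq c r).
Proof.
  intros p [H1 H2].
  exists (Rmin (r - Rabs (fst p - fst c)) (r - Rabs (snd p - snd c))).
  pose proof (Rmin_l (r - Rabs (fst p - fst c)) (r - Rabs (snd p - snd c))).
  pose proof (Rmin_r (r - Rabs (fst p - fst c)) (r - Rabs (snd p - snd c))).
  assert (Hm : 0 < Rmin (r - Rabs (fst p - fst c)) (r - Rabs (snd p - snd c)))
    by (apply Rmin_pos; lra).
  split; auto. intros q Hq. apply small_coord in Hq as [A B]; auto.
  split.
  - replace (fst q - fst c) with ((fst q - fst p) + (fst p - fst c)) by ring.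
    pose proof (Rabs_triang (fst q - fst p) (fst p - fst c)). lra.
  - replace (snd q - snd c) with ((snd q - snd p) + (snd p - snd c)) by ring.
    pose proof (Rabs_triang (snd q - snd p) (snd p - snd c)). lra.
Qed.

Lemma abs_sep a b z r : Rabs (a - b) = 2 * r -> Rabs (z - a) < r -> Rabs (z - b) < r -> False.
Proof. unfold Rabs; repeat destruct (Rcase_abs _); lra. Qed.

Lemma sq_disj c d : c <> d -> exists r, 0 < r /\ forall z, ~ (sq c r z /\ sq d r z).
Proof.
  destruct c as [c1 c2], d as [d1 d2]. intros Hcd.
  destruct (Req_dec c1 d1) as [E1|N1].
  - destruct (Req_dec c2 d2) as [E2|N2]. { subst; congruence. }
    exists (Rabs (c2 - d2) / 2). split. { pose proof (Rabs_pos_lt (c2 - d2)). lra. }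
    intros z [[_ A] [_ B]]. simpl in *.
    apply (abs_sep c2 d2 (snd z) (Rabs (c2 - d2) / 2)); auto; lra.
  - exists (Rabs (c1 - d1) / 2). split. { pose proof (Rabs_pos_lt (c1 - d1)). lra. }
    intros z [[A _] [B _]]. simpl in *.
    apply (abs_sep c1 d1 (fst z) (Rabs (c1 - d1) / 2)); auto; lra.
Qed.

Lemma pullback_mkU b F n q : pullback (mkU b F) n q <->
  (q = glue_pt /\ b) \/ (in_disk q /\ q <> glue_pt /\ F n q).
Proof.
  unfold pullback, mkU, origin; simpl. split.
  - intros [H|[h H]]; [left; exact H|right]. destruct h; simpl in H; tauto.
  - intros [H|(H1&H2&H3)]; [left; exact H|right]. exists (conj H1 H2). exact H3.
Qed.

Lemma crs_mkU b F :
  (forall n, ropen (fun q => (q = glue_pt /\ b) \/ (q <> glue_pt /\ F n q))) ->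
  (b -> exists N, forall n, (N <= n)%nat -> forall q, q <> vertex_pt -> F n q) ->
  crs_open (mkU b F).
Proof.
  intros Hr Hb. split.
  - intros n p Hp Hpb. apply pullback_mkU in Hpb. destruct (Hr n p) as [e [He Hq]].
    { destruct Hpb as [H|(_&H2&H3)]; [left|right]; tauto. }
    exists e; split; auto. intros q Hq1 Hq2. apply pullback_mkU.
    destruct (Hq q Hq2) as [H|H]; [left|right]; tauto.
  - intros Hb0. simpl in Hb0. destruct (Hb Hb0) as [N HN]. exists N.
    intros n Hn p Hp. simpl. apply HN; auto.
Qed.

Lemma glue_ne_vertex : glue_pt <> vertex_pt.
Proof. unfold glue_pt, vertex_pt. intro E. injection E. lra. Qed.

Lemma crs_box n c r : crs_open (mkU False (fun k z => k = n /\ sq c r z)).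
Proof.
  apply crs_mkU; [|tauto]. intros k.
  apply (ropen_ext _ (fun q => q <> glue_pt /\ (k = n /\ sq c r q))).
  { intros q; tauto. }
  apply ropen_and; [apply ropen_neq|]. apply ropen_and; [apply ropen_const|apply ropen_sq].
Qed.

Lemma crs_Vn n : crs_open (mkU False (fun k _ => k = n)).
Proof.
  apply crs_mkU; [|tauto]. intros k.
  apply (ropen_ext _ (fun q => q <> glue_pt /\ k = n)).
  { intros q; tauto. }
  apply ropen_and; [apply ropen_neq|apply ropen_const].
Qed.

Lemma crs_W : crs_open (mkU True (fun _ q => q <> vertex_pt)).
Proof.
  apply crs_mkU.
  - intros k. apply (ropen_ext _ (fun q => q <> vertex_pt)); [|apply ropen_neq].
    intros q; split.
    + intros [[-> _]|[_ H]]; [apply glue_ne_vertex|exact H].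
    + intros H. destruct (classic (q = glue_pt)); [left|right]; tauto.
  - intros _. exists 0%nat. auto.
Qed.

Lemma sep_origin n (p : Dpunct) : exists U V : X -> Prop, crs_open U /\ crs_open V /\
  U origin /\ V (Some (n, p)) /\ (forall z, ~ (U z /\ V z)).
Proof.
  set (c := proj1_sig p).
  assert (Hc : glue_pt <> c) by (destruct (proj2_sig p); auto).
  destruct (sq_disj _ _ Hc) as [r [Hr Hd]].
  exists (mkU True (fun k z => (k <> n /\ z <> vertex_pt) \/ (k = n /\ sq glue_pt r z))),
         (mkU False (fun k z => k = n /\ sq c r z)).
  split; [|split; [apply crs_box|split; [simpl; exact I|split]]].
  - apply crs_mkU.
    + intros k. destruct (Nat.eq_dec k n) as [->|Hk].
      * apply (ropen_ext _ (sq glue_pt r)); [|apply ropen_sq].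
        intros q; split.
        -- intros [[-> _]|[_ [[H _]|[_ H]]]]; [apply sq_self; auto|congruence|exact H].
        -- intros H. destruct (classic (q = glue_pt)); [left|right]; tauto.
      * apply (ropen_ext _ (fun q => q <> vertex_pt)); [|apply ropen_neq].
        intros q; split.
        -- intros [[-> _]|[_ [[_ H]|[H _]]]]; [apply glue_ne_vertex|exact H|congruence].
        -- intros H. destruct (classic (q = glue_pt)); [left|right]; tauto.
    + intros _. exists (S n). intros m Hm q Hq. left. split; auto. lia.
  - simpl. split; auto. apply sq_self; auto.
  - intros [[k w]|] [HU HV]; simpl in *; [|exact HV].
    destruct HV as [-> HV]. destruct HU as [[H _]|[_ H]]; [congruence|].
    apply (Hd (proj1_sig w)); auto.
Qed.

Lemma dp_eq (p q : Dpunct) : proj1_sig p = proj1_sig q -> p = q.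
Proof.
  destruct p, q; simpl; intros ->. f_equal. apply proof_irrelevance.
Qed.

Lemma haus : hausdorff crs_open.
Proof.
  intros [[n p]|] [[m q]|] Hxy.
  - destruct (Nat.eq_dec n m) as [<-|Hnm].
    + assert (Hpq : proj1_sig p <> proj1_sig q)
        by (intro E; apply Hxy; rewrite (dp_eq _ _ E); reflexivity).
      destruct (sq_disj _ _ Hpq) as [r [Hr Hd]].
      exists (mkU False (fun k z => k = n /\ sq (proj1_sig p) r z)),
             (mkU False (fun k z => k = n /\ sq (proj1_sig q) r z)).
      split; [apply crs_box|split; [apply crs_box|]].
      split; [simpl; split; auto; apply sq_self; auto|].
      split; [simpl; split; auto; apply sq_self; auto|].
      intros [[k w]|] [HU HV]; simpl in *; [|exact HV].
      apply (Hd (proj1_sig w)); tauto.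
    + exists (mkU False (fun k _ => k = n)), (mkU False (fun k _ => k = m)).
      split; [apply crs_Vn|split; [apply crs_Vn|]].
      split; [simpl; auto|]. split; [simpl; auto|].
      intros [[k w]|] [HU HV]; simpl in *; [congruence|exact HV].
  - destruct (sep_origin n p) as (U & V & H1 & H2 & H3 & H4 & H5).
    exists V, U. split; [exact H2|split; [exact H1|split; [exact H4|split; [exact H3|]]]].
    intros z [A B]. apply (H5 z); auto.
  - exact (sep_origin m q).
  - congruence.
Qed.

Lemma vtx_prop : in_disk vertex_pt /\ vertex_pt <> glue_pt.
Proof.
  split. { unfold in_disk, vertex_pt; simpl; lra. }
  intro E; apply glue_ne_vertex; auto.
Qed.

Definition vtx (n : nat) : X := Some (n, exist _ vertex_pt vtx_prop).

Lemma not_para : ~ paracompact crs_open.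
Proof.
  intros [_ H].
  set (W := mkU True (fun _ q => q <> vertex_pt)).
  set (Ucov := fun i : option nat => match i with None => W | Some n => mkU False (fun k _ => k = n) end).
  destruct (H (option nat) Ucov) as (J & V & [Vopen Vcov] & Vref & Vlf).
  { split.
    - intros [n|]; [apply crs_Vn|apply crs_W].
    - intros [[m p]|]; [|exists None; simpl; exact I].
      destruct (classic (proj1_sig p = vertex_pt)).
      + exists (Some m). simpl. reflexivity.
      + exists None. simpl. exact H0. }
  assert (Hex : forall n, exists j, V j (vtx n) /\ forall z, V j z -> mkU False (fun k _ => k = n) z).
  { intros n. destruct (Vcov (vtx n)) as [j Hj]. exists j. split; auto.
    destruct (Vref j) as [[m|] Hi].
    - intros z Hz. pose proof (Hi _ Hj) as Hn. simpl in Hn. subst m. apply Hi; auto.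
    - exfalso. pose proof (Hi _ Hj) as Hn. simpl in Hn. apply Hn; reflexivity. }
  set (f := fun n => proj1_sig (constructive_indefinite_description _ (Hex n))).
  assert (Hf : forall n, V (f n) (vtx n) /\ forall z, V (f n) z -> mkU False (fun k _ => k = n) z).
  { intros n. unfold f. destruct (constructive_indefinite_description _ (Hex n)); auto. }
  assert (Hinj : forall n m, f n = f m -> n = m).
  { intros n m E. destruct (Hf m) as [Hm _]. rewrite <- E in Hm.
    destruct (Hf n) as [_ Hn]. specialize (Hn _ Hm). simpl in Hn. auto. }
  destruct (Vlf origin) as (W' & HW' & HW'o & l & Hl).
  destruct (proj2 HW' HW'o) as [N HN].
  assert (Hin : forall n, (N <= n)%nat -> In (f n) l).
  { intros n Hn. apply Hl.
    destruct (Hf n) as [Hv _].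
    destruct (proj1 (Vopen (f n)) n vertex_pt (proj1 vtx_prop)) as [e [He Hb]].
    { right. exists vtx_prop. exact Hv. }
    set (t := Rmin (e / 2) 1).
    assert (Ht1 : t <= e / 2) by apply Rmin_l.
    assert (Ht2 : t <= 1) by apply Rmin_r.
    assert (Ht0 : 0 < t) by (apply Rmin_pos; lra).
    assert (Hq : in_disk (1 - t, 0)) by (unfold in_disk; simpl; nra).
    destruct (Hb (1 - t, 0) Hq) as [[E _]|[h Hz]].
    { unfold vertex_pt; simpl; nra. }
    { unfold glue_pt in E. injection E. lra. }
    exists (Some (n, exist _ (1 - t, 0) h)). split; auto.
    apply HN; auto. simpl. unfold vertex_pt. intro E. injection E. lra. }
  assert (Hnd : NoDup (map f (seq N (S (length l))))).
  { apply NoDup_map_NoDup_ForallPairs; [|apply seq_NoDup].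
    intros a b _ _ E. apply Hinj; auto. }
  assert (Hinc : incl (map f (seq N (S (length l)))) l).
  { intros y Hy. apply in_map_iff in Hy as [n [<- Hn]]. apply in_seq in Hn.
    apply Hin. lia. }
  pose proof (NoDup_incl_length Hnd Hinc) as Hlen.
  rewrite length_map, length_seq in Hlen. lia.
Qed.

Theorem proposition1p1 : hausdorff crs_open /\ ~ paracompact crs_open.
Proof. split; [exact haus|exact not_para]. Qed.
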